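(* There exists a hereditary subshift $X\subseteq\{0,1\}^{\mathbb{N}}$ whose factor complexity is sublinear (the number of words of length $n$ in its language is $\mathcal{O}(n)$) and which has infinite coding dimension.
   Context: Subshift: closed shift-invariant subset of $\{0,1\}^{\mathbb{N}}$. $X$ is hereditary if whenever $\mathbf{y}\in X$ and $\mathbf{x}\le\mathbf{y}$ coordinatewise (with $0<1$), then $\mathbf{x}\in X$. Infinite coding dimension means there is no $d\in\mathbb{N}$ with $\sum_i x_i\le d$ for all $\mathbf{x}\in X$. *)

(* Defs.v *)
From mathcomp Require Import all_boot.
From mathcomp Require Import boolp.
Set Implicit Arguments. Unset Strict Implicit. Unset Printing Implicit Defensive.

(* One-sided binary sequences {0,1}^N, encoded as nat -> bool (false = 0, true = 1). *)
Definition bseq := nat -> bool.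
Definition shiftspace := bseq -> Prop.

(* Closedness in the product (Cantor) topology: a point all of whose cylinder
   neighbourhoods [x_0 ... x_{n-1}] meet X belongs to X. *)
Definition cantor_closed (X : shiftspace) : Prop :=
  forall x : bseq,
    (forall n, exists y, X y /\ forall i, i < n -> y i = x i) -> X x.

Definition shift (x : bseq) : bseq := fun i => x i.+1.

Definition shift_invariant (X : shiftspace) : Prop :=
  forall x, X x -> X (shift x).

Definition subshift (X : shiftspace) : Prop :=
  cantor_closed X /\ shift_invariant X.

(* Coordinatewise order with 0 < 1. *)
Definition hereditary (X : shiftspace) : Prop :=
  forall x y : bseq, X y -> (forall i, x i <= y i) -> X x.

Definition in_language (X : shiftspace) (n : nat) (w : n.-tuple bool) : Prop :=
  exists x, X x /\ exists k, forall i : 'I_n, tnth w i = x (k + i).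

Definition complexity (X : shiftspace) (n : nat) : nat :=
  #|[set w : n.-tuple bool | `[< in_language X w >]]|.

Definition sublinear_complexity (X : shiftspace) : Prop :=
  exists C : nat, forall n, 0 < n -> complexity X n <= C * n.

Definition infinite_coding_dimension (X : shiftspace) : Prop :=
  ~ exists d : nat, forall x, X x -> forall N, \sum_(i < N) (x i : nat) <= d.

(* Main.v *)
Require Import Defs.
From mathcomp Require Import all_boot.
From mathcomp Require Import boolp.
From mathcomp Require Import zify.

Fixpoint pp (k : nat) : nat :=
  if k is k'.+1 then pp k' + 2 ^ k'.+3 * (pp k' + 1) else 0.

Definition gg (d : nat) := 2 ^ d.+3 * (pp d + 1).

Lemma ppS d : pp d.+1 = pp d + gg d. Proof. by []. Qed.

Lemma gg_gt d : d < gg d.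
Proof.
rewrite /gg. have h : d < 2 ^ d.+3.
  have := ltn_expl d (isT : 1 < 2). rewrite !expnS. lia.
apply: (leq_trans h). rewrite -{1}(muln1 (2 ^ d.+3)). apply: leq_mul => //. lia.
Qed.

Lemma pp_le a c : a <= c -> pp a <= pp c.
Proof.
move=> /subnK <-; elim: (c - a) => [|m IH] //.
rewrite addSn ppS. lia.
Qed.

Lemma pp_lt a c : a < c -> pp a + gg a <= pp c.
Proof. move=> h; rewrite -ppS; exact: pp_le. Qed.

Lemma gg_pos d : 0 < gg d.
Proof. have := gg_gt d; lia. Qed.

Lemma pp_ge k : k <= pp k.
Proof. elim: k => [|k IH] //; rewrite ppS; have := gg_pos k; lia. Qed.

Definition Pb (m : nat) : bool := [exists k : 'I_m.+1, pp k == m].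

Lemma PbP m : reflect (exists k, pp k = m) (Pb m).
Proof.
apply: (iffP existsP) => [[k /eqP <-]|[k hk]]; first by exists k.
have hk' : k < m.+1 by rewrite ltnS -hk pp_ge.
by exists (Ordinal hk'); rewrite /= hk.
Qed.

Definition XX : shiftspace :=
  fun x => forall n, exists s, forall i, i < n -> x i -> Pb (i + s).

Lemma XX_subshift : subshift XX.
Proof.
split.
- move=> x H n. have [y [Xy Hy]] := H n. have [s Hs] := Xy n.
  exists s => i hi xi. apply: Hs => //. by rewrite Hy.
- move=> x Xx n. have [s Hs] := Xx n.+1. exists s.+1 => i hi xi.
  rewrite addnS -addSn. exact: Hs.
Qed.

Lemma XX_her : hereditary XX.
Proof.
move=> x y Xy H n. have [s Hs] := Xy n. exists s => i hi xi.
apply: Hs => //. have := H i. by rewrite xi; case: (y i).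
Qed.

Definition x0 : nat -> bool := Pb.

Lemma x0_in : XX x0.
Proof. move=> n; exists 0 => i _; by rewrite addn0. Qed.

Lemma x0_sum d : d < \sum_(i < (pp d).+1) (x0 i : nat).
Proof.
elim: d => [|d IH].
  rewrite big_ord_recl /=. have -> : x0 0 = true by apply/PbP; exists 0.
  done.
rewrite -!(big_mkord xpredT (fun i => (x0 i : nat))) in IH *.
have hlt := @pp_lt d d.+1 (ltnSn d). have hg := gg_pos d.
rewrite (@big_cat_nat _ _ _ (pp d).+1) //; last by lia.
rewrite (@big_nat_recr _ _ _ (pp d.+1) (pp d).+1); last by lia.
have -> : x0 (pp d.+1) = true by apply/PbP; exists d.+1.
rewrite /=. lia.
Qed.

Lemma XX_icd : infinite_coding_dimension XX.
Proof.
move=> [d Hd]. have := Hd _ x0_in (pp d).+1. have := x0_sum d. lia.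
Qed.

Definition DD n := \max_(d < n | gg d < n) (d : nat).

Lemma DD_ge n d : d < n -> gg d < n -> d <= DD n.
Proof.
move=> h hg. exact: (@leq_bigmax_cond _ (fun d : 'I_n => gg d < n) (fun d : 'I_n => (d : nat)) (Ordinal h)).
Qed.

Lemma DD_prop n : DD n = 0 \/ gg (DD n) < n.
Proof.
rewrite /DD. apply: (big_ind (fun m => m = 0 \/ gg m < n)); first by left.
- move=> x y hx hy. rewrite /= /maxn. by case: (x < y).
- by move=> i hi; right.
Qed.

Lemma gg_DD1 n : n <= gg (DD n).+1.
Proof.
rewrite leqNgt; apply/negP => h.
have hlt := gg_gt (DD n).+1.
have := @DD_ge n (DD n).+1 ltac:(lia) h. lia.
Qed.

Definition Gw n (o : option 'I_n) : n.-tuple bool :=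
  [tuple (if o is Some b then i == b else false) | i < n].

Definition Fw n (q : 'I_(pp (DD n)).+1 * {ffun 'I_(DD n).+2 -> bool}) : n.-tuple bool :=
  [tuple [exists e : 'I_(DD n).+2, q.2 e && (pp e == q.1 + i)] | i < n].

Lemma cover n (w : n.-tuple bool) : in_language XX w ->
  w \in (Gw n @: setT) :|: (Fw n @: setT).
Proof.
move=> [x [Xx [k Hw]]].
have [s Hs] := Xx (k + n).
pose t := k + s.
have Hone : forall i : 'I_n, tnth w i -> exists e, pp e = t + i.
  move=> i wi. apply/PbP. have := Hs (k + i). rewrite -Hw ltn_add2l ltn_ord => /(_ isT wi).
  by have -> : t + i = k + i + s by rewrite /t; lia.
case: (boolP [exists i : 'I_n, exists j : 'I_n, [&& i < j, tnth w i & tnth w j]]).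
- move=> /existsP [i /existsP [j /and3P [hij wi wj]]].
  apply/setUP; right.
  have [a ha] := Hone i wi. have [c hc] := Hone j wj.
  have hac : a < c.
    rewrite ltnNge; apply/negP => hca; have := @pp_le c a hca; lia.
  have hj := ltn_ord j.
  have hgd : gg c.-1 < n.
    have := @pp_lt c.-1 c ltac:(lia). have := @pp_le a c.-1 ltac:(lia). lia.
  have hdD : c.-1 <= DD n.
    have := gg_gt c.-1. move=> ?; apply: DD_ge; lia.
  have htD : t <= pp (DD n).
    have := @pp_le a c.-1 ltac:(lia). have := @pp_le c.-1 (DD n) hdD. lia.
  have hgD1 := gg_DD1 n.
  pose m := [ffun e : 'I_(DD n).+2 => [exists i' : 'I_n, tnth w i' && (pp e == t + i')]].
  have ht : t < (pp (DD n)).+1 by lia.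
  apply/imsetP; exists (Ordinal ht, m); first by rewrite inE.
  apply: eq_from_tnth => i0. rewrite tnth_mktuple /=.
  have hi0 := ltn_ord i0.
  case wi0: (tnth w i0).
  + have [e he] := Hone i0 wi0. have heD : e < (DD n).+2.
      rewrite ltnNge; apply/negP => h.
      have := @pp_lt (DD n).+1 e h. have := @pp_le a (DD n).+1 ltac:(lia). lia.
    symmetry; apply/existsP; exists (Ordinal heD). rewrite ffunE /=.
    apply/andP; split; last exact/eqP.
    apply/existsP; exists i0. rewrite wi0 /=. exact/eqP.
  + symmetry; apply/negbTE/negP => /existsP [e /andP [me /eqP he]].
    rewrite ffunE in me. move/existsP: me => [i' /andP [wi' /eqP he']].
    have ei : i' = i0 by apply: val_inj; rewrite /=; lia.
    by rewrite ei wi0 in wi'.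
- rewrite negb_exists => /forallP H.
  apply/setUP; left. apply/imsetP.
  case: (boolP [exists b : 'I_n, tnth w b]).
  + move=> /existsP [b wb]. exists (Some b); first by rewrite inE.
    apply: eq_from_tnth => i0; rewrite tnth_mktuple.
    case: (eqVneq i0 b) => [->|ne]; first by [].
    apply/negP => wi0. move: ne; rewrite neq_ltn => /orP [h|h].
    * move: (H i0); rewrite negb_exists => /forallP /(_ b). by rewrite h wi0 wb.
    * move: (H b); rewrite negb_exists => /forallP /(_ i0). by rewrite h wi0 wb.
  + rewrite negb_exists => /forallP Hn. exists None; first by rewrite inE.
    apply: eq_from_tnth => i0; rewrite tnth_mktuple. exact/negbTE/Hn.
Qed.

Lemma card_cover n : 0 < n -> #|(Gw n @: setT) :|: (Fw n @: setT)| <= 7 * n.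
Proof.
move=> hn.
have h1 : #|Gw n @: setT| <= n.+1.
  apply: leq_trans (leq_imset_card _ _) _. by rewrite cardsT card_option card_ord.
have h2 : #|Fw n @: setT| <= (pp (DD n)).+1 * 2 ^ (DD n).+2.
  apply: leq_trans (leq_imset_card _ _) _.
  by rewrite cardsT card_prod card_ffun card_bool !card_ord.
have h3 : (pp (DD n)).+1 * 2 ^ (DD n).+2 <= n + 4.
  case: (DD_prop n) => [->|h]; first by rewrite (_ : (pp 0).+1 * 2 ^ 2 = 4) // leq_addl.
  move: h; rewrite /gg expnS. lia.
set P := (pp (DD n)).+1 * 2 ^ (DD n).+2 in h2 h3.
clearbody P. rewrite cardsU. apply: leq_trans (leq_subr _ _) _.
apply: leq_trans (leq_add h1 h2) _. lia.
Qed.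

Theorem mainTheorem6 :
  exists X : shiftspace,
    subshift X /\ hereditary X /\ sublinear_complexity X /\ infinite_coding_dimension X.
Proof.
exists XX; split; first exact: XX_subshift.
split; first exact: XX_her.
split; last exact: XX_icd.
exists 7 => n hn. rewrite /complexity. apply: (@leq_trans _ _ _ _ (@card_cover n hn)).
apply: subset_leq_card; apply/subsetP => w; rewrite inE => /asboolP; exact: cover.
Qed.
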